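(* Let $x$ be a positive integer and $v=(v_1,v_2,\dots)$ a back tracing parity vector for $x$. Let $p_n$ be the number of $1$'s among $v_1,\dots,v_n$ divided by $n$. Then $\limsup_{n\to\infty}p_n\le\log_3 2$.
   Context: Let $T(z)=z/2$ for $z$ even and $T(z)=(3z+1)/2$ for $z$ odd. A sequence $(v_1,v_2,\dots)\in\{0,1\}^{\mathbb{N}}$ is a back tracing parity vector for a positive integer $x$ if there are positive integers $x_0=x,x_1,x_2,\dots$ with $T(x_i)=x_{i-1}$ and $x_i\equiv v_i\pmod 2$ for all $i\ge1$. *)

(* Defs.v *)
From Stdlib Require Import Reals Arith.
Open Scope R_scope.

Definition T (z : nat) : nat :=
  if Nat.even z then Nat.div z 2 else Nat.div (3 * z + 1) 2.

(* v : nat -> bool, with v i (i >= 1) the i-th parity bit (true = 1 = odd);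
   v 0 is unused.  *)
Definition back_tracing_parity_vector (x : nat) (v : nat -> bool) : Prop :=
  exists xs : nat -> nat,
    xs 0%nat = x /\
    forall i : nat, (1 <= i)%nat ->
      (0 < xs i)%nat /\ T (xs i) = xs (i - 1)%nat /\ Nat.odd (xs i) = v i.

Fixpoint ones_count (v : nat -> bool) (n : nat) : nat :=
  match n with
  | O => O
  | S m => (ones_count v m + (if v (S m) then 1 else 0))%nat
  end.

Definition p (v : nat -> bool) (n : nat) : R := INR (ones_count v n) / INR n.

(* limsup_{n -> oo} u_n <= L, unfolded (for sequences bounded above, as here). *)
Definition limsup_le (u : nat -> R) (L : R) : Prop :=
  forall eps : R, 0 < eps -> exists N : nat, forall n : nat, (N <= n)%nat -> u n <= L + eps.

(* Main.v *)
Require Import Defs.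
From Stdlib Require Import Reals Arith Lia Lra.
Open Scope R_scope.

Lemma T_odd z : Nat.odd z = true -> (2 * T z = 3 * z + 1)%nat.
Proof.
  intro H. unfold T. rewrite <- Nat.negb_odd, H. simpl negb. cbv iota.
  apply Nat.odd_spec in H. destruct H as [m Hm]. subst z.
  replace (3 * (2 * m + 1) + 1)%nat with ((3*m+2)*2)%nat by lia.
  rewrite Nat.div_mul by lia. lia.
Qed.

Lemma T_even z : Nat.odd z = false -> (2 * T z = z)%nat.
Proof.
  intro H. unfold T. rewrite <- Nat.negb_odd, H. simpl negb. cbv iota.
  assert (He : Nat.even z = true) by (rewrite <- Nat.negb_odd, H; reflexivity).
  apply Nat.even_spec in He. destruct He as [m Hm]. subst z.
  replace (2 * m)%nat with (m*2)%nat by lia.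
  rewrite Nat.div_mul by lia. lia.
Qed.

Lemma key x v xs : xs 0%nat = x ->
  (forall i : nat, (1 <= i)%nat ->
      (0 < xs i)%nat /\ T (xs i) = xs (i - 1)%nat /\ Nat.odd (xs i) = v i) ->
  forall n, (3 ^ ones_count v n * xs n <= x * 2 ^ n)%nat.
Proof.
  intros H0 H. induction n as [|n IH].
  - simpl. lia.
  - destruct (H (S n) ltac:(lia)) as [_ [HT Ho]].
    replace (S n - 1)%nat with n in HT by lia.
    simpl ones_count. destruct (v (S n)) eqn:Ev.
    + pose proof (T_odd _ Ho) as E. rewrite HT in E.
      rewrite Nat.add_1_r, Nat.pow_succ_r', Nat.pow_succ_r'. nia.
    + pose proof (T_even _ Ho) as E. rewrite HT in E.
      rewrite Nat.add_0_r, Nat.pow_succ_r'. nia.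
Qed.

Lemma ln_le' a b : 0 < a -> a <= b -> ln a <= ln b.
Proof.
  intros Ha Hab. destruct (Rle_lt_or_eq_dec _ _ Hab) as [Hl|He].
  - left. apply ln_increasing; auto.
  - subst. lra.
Qed.

Theorem mainTheorem9 (x : nat) (v : nat -> bool) :
  (0 < x)%nat ->
  back_tracing_parity_vector x v ->
  limsup_le (p v) (ln 2 / ln 3).
Proof.
  intros Hx [xs [H0 H]] eps Heps.
  assert (K : forall n, (3 ^ ones_count v n <= x * 2 ^ n)%nat).
  { intro n. pose proof (key x v xs H0 H n).
    assert (0 < xs n)%nat.
    { destruct n. lia. apply (H (S n)). lia. }
    nia. }
  assert (L3 : 0 < ln 3).
  { rewrite <- ln_1. apply ln_increasing; lra. }
  assert (L2 : 0 < ln 2).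
  { rewrite <- ln_1. apply ln_increasing; lra. }
  destruct (INR_unbounded (ln (INR x) / (eps * ln 3))) as [N HN].
  exists (S N). intros n Hn.
  assert (Hxr : 1 <= INR x) by (apply (le_INR 1); lia).
  assert (Hlx : 0 <= ln (INR x)) by (rewrite <- ln_1; apply ln_le'; lra).
  assert (HnN : INR N <= INR n) by (apply le_INR; lia).
  assert (Hn0 : 0 < INR n) by (apply lt_0_INR; lia).
  pose proof (K n) as Kn. apply le_INR in Kn.
  rewrite mult_INR, !pow_INR in Kn. simpl INR in Kn.
  replace (1+1+1) with 3 in Kn by lra. replace (1+1) with 2 in Kn by lra.
  apply ln_le' in Kn; [|apply pow_lt; lra].
  rewrite ln_mult, !ln_pow in Kn by (try apply pow_lt; lra).
  set (k := INR (ones_count v n)) in *.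
  unfold p. fold k.
  assert (HN' : ln (INR x) <= eps * ln 3 * INR n).
  { assert (Hp : 0 < eps * ln 3) by (apply Rmult_lt_0_compat; lra).
    apply Rlt_le in HN. unfold Rgt in HN.
    apply (Rmult_le_compat_l (eps * ln 3)) in HN; [|lra].
    field_simplify in HN; [|lra]. nra. }
  apply (Rmult_le_reg_r (INR n * ln 3)); [nra|].
  field_simplify; [|lra|lra]. nra.
Qed.
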